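(* Let $n\ge 5$ and let $T(n)$ be the triangular graph. The complement $\overline{T(n)}$ of $T(n)$ is a Neumaier graph if and only if $n$ is even. In this case, if $\overline{T(n)}$ is a (strongly regular) Neumaier graph with parameters $(\binom{n}{2},k,\lambda,\mu;a,c)$, then $n=2a+4$ and $c=a+2$.
   Context: The triangular graph $T(n)$ ($n\ge5$) is the line graph of the complete graph $K_n$: its vertices are the 2-subsets of $\{1,\dots,n\}$, two being adjacent iff they intersect; $T(n)$ and its complement are strongly regular. A graph is edge-regular with parameters $(n,k,\lambda)$ if it has $n$ vertices, is $k$-regular, and any two adjacent vertices have exactly $\lambda$ common neighbours. A clique $C$ is a regular clique with nexus $a$ if every vertex not in $C$ has exactly $a$ neighbours in $C$. A Neumaier graph is a non-complete edge-regular graph containing a regular clique; it has parameters $(n,k,\lambda;a,c)$ if it is edge-regular with parameters $(n,k,\lambda)$ and contains a regular clique of size $c$ with nexus $a$. A strongly regular Neumaier graph with parameters $(n,k,\lambda,\mu;a,c)$ is a strongly regular graph with parameters $(n,k,\lambda,\mu)$ (non-complete, connected, $k$-regular, adjacent vertices having $\lambda$ and non-adjacent vertices having $\mu$ common neighbours) which is a Neumaier graph with parameters $(n,k,\lambda;a,c)$. *)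

(* Defs.v *)
From mathcomp Require Import all_boot.
Set Implicit Arguments. Unset Strict Implicit. Unset Printing Implicit Defensive.

Section Graphs.
Variable T : finType.
Implicit Types (e : rel T) (C : {set T}).

Definition compl_graph e : rel T := fun x y => (x != y) && ~~ e x y.

Definition complete e := forall x y : T, x != y -> e x y.

Definition regular e (k : nat) := forall x : T, #|[set y | e x y]| = k.

Definition edge_regular e (n k l : nat) :=
  [/\ #|T| = n, regular e k &
      forall x y, e x y -> #|[set z | e x z && e y z]| = l].

Definition is_clique e C := forall x y, x \in C -> y \in C -> x != y -> e x y.

Definition regular_clique e C (a : nat) :=
  [/\ is_clique e C, C != set0 &
      forall x, x \notin C -> #|[set y in C | e x y]| = a].

Definition Neumaier_with e (n k l a c : nat) :=
  [/\ ~ complete e, edge_regular e n k l &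
      exists C : {set T}, regular_clique e C a /\ #|C| = c].

Definition Neumaier e := exists n k l a c, Neumaier_with e n k l a c.

Definition strongly_regular e (n k l m : nat) :=
  #|T| = n /\ ~ complete e /\ (forall x y, connect e x y) /\ regular e k /\
  (forall x y, e x y -> #|[set z | e x z && e y z]| = l) /\
  (forall x y, x != y -> ~~ e x y -> #|[set z | e x z && e y z]| = m).

Definition SR_Neumaier_with e (n k l m a c : nat) :=
  strongly_regular e n k l m /\ Neumaier_with e n k l a c.

End Graphs.

Definition pair_vertex (n : nat) := {A : {set 'I_n} | #|A| == 2}.

Definition tri_adj (n : nat) : rel (pair_vertex n) :=
  fun A B => (A != B) && (val A :&: val B != set0).
Arguments tri_adj n : clear implicits.

(* Main.v *)
Require Import Defs.
From mathcomp Require Import all_boot zify.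
Set Implicit Arguments. Unset Strict Implicit. Unset Printing Implicit Defensive.

Lemma card_pv n (v : pair_vertex n) : #|val v| = 2.
Proof. by case: v => A /= /eqP. Qed.

Lemma adjE n (v w : pair_vertex n) :
  compl_graph (tri_adj n) v w = [disjoint val v & val w].
Proof.
rewrite /compl_graph /tri_adj -setI_eq0.
case: (eqVneq v w) => [->|ne] /=.
  by rewrite setIid -cards_eq0 card_pv.
by rewrite negbK.
Qed.

Lemma card_sub n (S : {set 'I_n}) :
  #|[set v : pair_vertex n | val v \subset S]| = 'C(#|S|, 2).
Proof.
rewrite -cards_draws -(card_imset _ val_inj).
congr (#|pred_of_set _|); apply/setP => A; rewrite inE.
apply/imsetP/andP.
  by case=> v; rewrite inE => H ->; split; [done | rewrite card_pv].
case=> H1 H2; exists (exist (fun A : {set 'I_n} => #|A| == 2) A H2) => //.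
by rewrite inE.
Qed.

Lemma mkv n (x y : 'I_n) : x != y -> exists v : pair_vertex n, val v = [set x; y].
Proof.
move=> ne; have H : #|[set x; y]| == 2 by rewrite cards2 ne.
by exists (exist (fun A : {set 'I_n} => #|A| == 2) _ H).
Qed.

Lemma card_all n : #|[set: pair_vertex n]| = 'C(n, 2).
Proof.
rewrite -[n in RHS]card_ord -cardsT -card_sub.
by apply: eq_card => v; rewrite !inE subsetT.
Qed.

Lemma deg n (v : pair_vertex n) :
  #|[set w | compl_graph (tri_adj n) v w]| = 'C(n - 2, 2).
Proof.
have -> : [set w | compl_graph (tri_adj n) v w] = [set w : pair_vertex n | val w \subset ~: val v].
  by apply/setP => w; rewrite !inE adjE disjoint_sym disjoints_subset.
rewrite card_sub; congr 'C(_, 2).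
have := cardsC (val v); rewrite card_pv card_ord; lia.
Qed.

Lemma common n (v w : pair_vertex n) : compl_graph (tri_adj n) v w ->
  #|[set z | compl_graph (tri_adj n) v z && compl_graph (tri_adj n) w z]| = 'C(n - 4, 2).
Proof.
rewrite adjE => dvw.
have -> : [set z | compl_graph (tri_adj n) v z && compl_graph (tri_adj n) w z]
   = [set z : pair_vertex n | val z \subset ~: (val v :|: val w)].
  apply/setP => z; rewrite !inE !adjE setCU subsetI.
  by rewrite ![[disjoint _ & val z]]disjoint_sym !disjoints_subset.
rewrite card_sub; congr 'C(_, 2).
have := cardsC (val v :|: val w); rewrite cardsU (disjoint_setI0 dvw) cards0.
rewrite !card_pv card_ord; lia.
Qed.

Lemma not_complete n : 3 <= n -> ~ complete (compl_graph (tri_adj n)).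
Proof.
move=> hn cpl.
have : 0 < #|[set: pair_vertex n]| by rewrite card_all bin_gt0; apply: leq_trans hn.
case/card_gt0P => v _.
have E : [set w | compl_graph (tri_adj n) v w] = [set~ v].
  apply/setP => w; rewrite !inE; case: (eqVneq w v) => [->|ne].
    by rewrite /compl_graph eqxx.
  by apply: cpl; rewrite eq_sym.
have := deg v; rewrite E cardsC1 -cardsT card_all.
clear -hn; case: n hn => [|[|p]] // hn.
rewrite !binS !bin1 !subSS subn0; lia.
Qed.

Lemma clique_disj n (C : {set pair_vertex n}) v w :
  is_clique (compl_graph (tri_adj n)) C -> v \in C -> w \in C -> v != w ->
  [disjoint val v & val w].
Proof. by move=> cl vC wC ne; rewrite -adjE; apply: cl. Qed.

Lemma clique_uniq n (C : {set pair_vertex n}) v w x :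
  is_clique (compl_graph (tri_adj n)) C -> v \in C -> w \in C ->
  x \in val v -> x \in val w -> v = w.
Proof.
move=> cl vC wC xv xw; apply/eqP; apply/negPn/negP => ne.
move: (clique_disj cl vC wC ne); rewrite disjoints_subset => /subsetP/(_ x xv).
by rewrite inE xw.
Qed.

Lemma nexus_pair n (C : {set pair_vertex n}) a (x y : 'I_n) :
  regular_clique (compl_graph (tri_adj n)) C a -> x != y ->
  (forall u, u \in C -> val u != [set x; y]) ->
  #|[set w in C | (x \notin val w) && (y \notin val w)]| = a.
Proof.
case=> cl _ nx ne nC; have [v vE] := mkv ne.
have vC : v \notin C by apply/negP => /nC; rewrite vE eqxx.
rewrite -(nx v vC); apply: eq_card => w; rewrite !inE adjE vE.
congr (_ && _); rewrite disjoints_subset subUset !sub1set !inE.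
by [].
Qed.

Section Analysis.
Lemma analysis n (C : {set pair_vertex n}) a : 5 <= n ->
  regular_clique (compl_graph (tri_adj n)) C a -> n = 2 * #|C| /\ a + 2 = #|C|.
Proof.
move=> hn rc; have [cl C0 nx] := rc.
have pv2 : forall v : pair_vertex n, exists2 p, p \in val v & exists2 q, q \in val v & p != q.
  move=> v; have /cards2P [p [q [ne E]]] : #|val v| == 2 by rewrite card_pv.
  by exists p; [rewrite E !inE eqxx | exists q; [rewrite E !inE eqxx orbT|]].
have [w0 w0C] := set0Pn _ C0.
have [p pw0 _] := pv2 w0.
have two : forall w1 y, w1 \in C -> y \in val w1 -> y \notin val w0 -> a + 2 = #|C|.
  move=> w1 y w1C yw1 yw0.
  have ne : p != y by apply: contraNneq yw0 => <-.
  have nC : forall u, u \in C -> val u != [set p; y].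
    move=> u uC; apply/negP => /eqP uE; have pu : p \in val u by rewrite uE !inE eqxx.
    have yu : y \in val u by rewrite uE !inE eqxx orbT.
    by move: yw0; rewrite -(clique_uniq cl uC w0C pu pw0) yu.
  have := nexus_pair rc ne nC.
  have -> : [set w in C | (p \notin val w) && (y \notin val w)] = C :\ w0 :\ w1.
    apply/setP => w; rewrite !inE; case wC: (w \in C); rewrite ?andbF //.
    case: (eqVneq w w0) => [->|n0]; first by rewrite pw0 /= ?andbF.
    case: (eqVneq w w1) => [->|n1]; first by rewrite yw1 /= ?andbF.
    rewrite /=; apply/andP; split; apply/negP => H.
      by move: n0; rewrite (clique_uniq cl wC w0C H pw0) eqxx.
    by move: n1; rewrite (clique_uniq cl wC w1C H yw1) eqxx.
  have w10 : w1 != w0 by apply: contraNneq yw0 => <-.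
  move=> <-; rewrite (cardsD1 w0 C) w0C (cardsD1 w1 (C :\ w0)) !inE w10 w1C /=; lia.
have outside : forall S : {set 'I_n}, #|S| < n -> exists y, y \notin S.
  move=> S hS; have : 0 < #|~: S| by have := cardsC S; rewrite card_ord; lia.
  by case/card_gt0P => y; rewrite inE; exists y.
have cov : forall x, exists2 w, w \in C & x \in val w.
  move=> x; case: (boolP [exists w in C, x \in val w]) => [/exists_inP //|/exists_inP nx0]; exfalso.
  have nx1 : forall w, w \in C -> x \notin val w.
    by move=> w wC; apply/negP => H; apply: nx0; exists w.
  have one : a + 1 = #|C|.
    have ne : x != p by apply: contraTneq pw0 => <-; rewrite nx1.
    have nC : forall u, u \in C -> val u != [set x; p].
      move=> u uC; apply/negP => /eqP uE; have : x \in val u by rewrite uE !inE eqxx.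
      by rewrite (negbTE (nx1 u uC)).
    have := nexus_pair rc ne nC.
    have -> : [set w in C | (x \notin val w) && (p \notin val w)] = C :\ w0.
      apply/setP => w; rewrite !inE; case wC: (w \in C); rewrite ?andbF //.
      rewrite nx1 //=; case: (eqVneq w w0) => [->|n0]; first by rewrite pw0 /= ?andbF.
      by apply/negP => H; move: n0; rewrite (clique_uniq cl wC w0C H pw0) eqxx.
    move=> <-; rewrite (cardsD1 w0 C) w0C /=. by rewrite addnC.
  have [y yS] : exists y, y \notin x |: val w0.
    apply: outside; rewrite cardsU1 card_pv; case: (x \notin val w0); lia.
  move: yS; rewrite !inE negb_or => /andP [nyx yw0].
  case: (boolP [exists w in C, y \in val w]) => [/exists_inP [w1 w1C yw1]|/exists_inP ny].
    by have := two w1 y w1C yw1 yw0; lia.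
  have ny1 : forall w, w \in C -> y \notin val w.
    by move=> w wC; apply/negP => H; apply: ny; exists w.
  have nC : forall u, u \in C -> val u != [set y; x].
    move=> u uC; apply/negP => /eqP uE; have : x \in val u by rewrite uE !inE eqxx orbT.
    by rewrite (negbTE (nx1 u uC)).
  have := nexus_pair rc (nyx : y != x) nC.
  have -> : [set w in C | (y \notin val w) && (x \notin val w)] = C.
    apply/setP => w; rewrite !inE; case wC: (w \in C); last by []. by rewrite /= ny1 ?nx1.
  move=> E; have : 0 < #|C| by apply/card_gt0P; exists w0.
  lia.
split; last first.
  have [y yw0] : exists y, y \notin val w0 by apply: outside; rewrite card_pv; lia.
  have [w1 w1C yw1] := cov y; exact: two w1 y w1C yw1 yw0.
have part : partition [set val w | w in C] [set: 'I_n].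
  apply/and3P; split.
  - rewrite eqEsubset subsetT /=; apply/subsetP => x _.
    have [w wC xw] := cov x; apply/bigcupP; exists (val w) => //.
    by apply/imsetP; exists w.
  - apply/trivIsetP => A B /imsetP [v vC ->] /imsetP [w wC ->] ne.
    by apply: (clique_disj cl vC wC); apply: contraNneq ne => ->.
  - apply/imsetP => [[w _ E]]; have := card_pv w; rewrite -E cards0.
    by [].
have := card_partition part; rewrite cardsT card_ord big_imset /=.
  rewrite (eq_bigr (fun _ => 2)) ?sum_nat_const; first by move=> E; rewrite mulnC; exact: E.
  by move=> w _; rewrite card_pv.
by move=> v w _ _; apply: val_inj.
Qed.
End Analysis.

Definition Bk n (j : nat) : {set 'I_n} := [set x : 'I_n | x %/ 2 == j].

Lemma cardB n m (hm : n = 2 * m) (j : 'I_m) : #|Bk n j| == 2.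
Proof.
have h1 : 2 * j < n by have := ltn_ord j; lia.
have h2 : 2 * j + 1 < n by have := ltn_ord j; lia.
have -> : Bk n j = [set Ordinal h1; Ordinal h2].
  apply/setP => x; rewrite !inE -!val_eqE /=.
  apply/eqP/orP => [H|[/eqP H|/eqP H]]; [|lia|lia].
  have [->|->] : (x : nat) = 2 * j \/ (x : nat) = 2 * j + 1 by lia.
    by left. by right.
rewrite cards2 -val_eqE /=; apply/eqP; lia.
Qed.

Definition blk n m (hm : n = 2 * m) (j : 'I_m) : pair_vertex n :=
  exist (fun A : {set 'I_n} => #|A| == 2) (Bk n j) (cardB hm j).

Lemma blk_inj n m (hm : n = 2 * m) : injective (blk hm).
Proof.
move=> i j /(congr1 val) /= E.
have h1 : 2 * i < n by have := ltn_ord i; lia.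
have : Ordinal h1 \in Bk n i by rewrite inE /=; apply/eqP; lia.
rewrite E inE /= => /eqP H; apply: val_inj => /=; lia.
Qed.

Lemma even_neumaier n : 5 <= n -> ~~ odd n -> Neumaier (compl_graph (tri_adj n)).
Proof.
move=> hn ev; set m := n./2.
have hm : n = 2 * m.
  have := odd_double_half n; rewrite (negbTE ev) -muln2 /= add0n => E.
  by rewrite -[in LHS]E mulnC.
pose C := [set blk hm j | j : 'I_m].
exists ('C(n, 2)), ('C(n - 2, 2)), ('C(n - 4, 2)), (m - 2), m.
split; first by apply: not_complete; lia.
  split; first by rewrite -cardsT card_all.
    by move=> v; rewrite deg.
  by move=> v w; apply: common.
exists C; split; last by rewrite card_imset //; [rewrite card_ord | apply: blk_inj].
split.
- move=> v w /imsetP [i _ ->] /imsetP [j _ ->] ne.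
  rewrite adjE /= disjoints_subset; apply/subsetP => x; rewrite !inE => /eqP xi.
  apply/negP => /eqP xj; move: ne; suff -> : i = j by rewrite eqxx.
  by apply: val_inj => /=; lia.
- have m0 : 0 < m by lia.
  by apply/set0Pn; exists (blk hm (Ordinal m0)); apply: imset_f.
move=> v vC.
have /cards2P [x [y [nxy vE]]] : #|val v| == 2 by rewrite card_pv.
have xm : x %/ 2 < m by have := ltn_ord x; lia.
have ym : y %/ 2 < m by have := ltn_ord y; lia.
have nxy2 : x %/ 2 != y %/ 2.
  apply/negP => /eqP exy; move: vC; suff -> : v = blk hm (Ordinal xm).
    by rewrite imset_f.
  apply: val_inj => /=; apply/eqP; rewrite eqEcard.
  have /eqP -> := cardB hm (Ordinal xm); rewrite card_pv leqnn andbT vE.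
  by rewrite subUset !sub1set !inE /= -exy eqxx.
have -> : [set w in C | compl_graph (tri_adj n) v w]
    = blk hm @: [set j | compl_graph (tri_adj n) v (blk hm j)].
  apply/setP => w; rewrite inE; apply/andP/imsetP.
    by case=> /imsetP [j _ ->] H; exists j; rewrite ?inE.
  by case=> j; rewrite inE => H ->; split; [apply: imset_f | ].
rewrite card_imset; last exact: blk_inj.
have -> : [set j | compl_graph (tri_adj n) v (blk hm j)]
    = ~: [set Ordinal xm; Ordinal ym].
  apply/setP => j; rewrite !inE adjE vE /= disjoints_subset subUset !sub1set.
  rewrite !inE -!val_eqE /= negb_or; congr (~~ _ && ~~ _); apply/eqP/eqP => //; lia.
have := cardsC [set Ordinal xm; Ordinal ym].
rewrite cards2 card_ord -val_eqE /= nxy2 /=; lia.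
Qed.

Theorem lemma4p8 (n : nat) (hn : 5 <= n) :
  (Neumaier (compl_graph (tri_adj n)) <-> ~~ odd n) /\
  (forall k l m a c : nat,
     SR_Neumaier_with (compl_graph (tri_adj n)) 'C(n, 2) k l m a c ->
     n = 2 * a + 4 /\ c = a + 2).
Proof.
split.
  split.
    case=> N [k [l [a [c [_ _ [C [rc _]]]]]]].
    have [E _] := analysis hn rc.
    have : odd n = odd (2 * #|C|) by rewrite -E.
    by rewrite oddM /= => ->.
  exact: even_neumaier hn.
move=> k l m a c [_ [_ _ [C [rc cC]]]].
have [E1 E2] := analysis hn rc.
have e1 : n = 2 * c by rewrite -cC -E1.
have e2 : a + 2 = c by rewrite -cC -E2.
lia.
Qed.
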